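(* Let $\Sigma=\{0,1\}$. The map $\mathrm{val}_{\mathcal{F}c}$ restricted to $D=\Sigma(\Sigma\Sigma)^*\setminus\left(\Sigma^*11\Sigma^*\cup000\Sigma^*\cup101\Sigma^*\right)$ is a bijection $D\to\mathbb{Z}$.
   Context: Fibonacci numbers: $F_0=1$, $F_1=2$, $F_n=F_{n-1}+F_{n-2}$ for $n\ge2$. For a nonempty binary word $w=w_{k-1}\cdots w_0$ (digits indexed from the right, $w_0$ is the last letter), $\mathrm{val}_{\mathcal{F}c}(w)=\sum_{i=0}^{k-1}w_iF_i-w_{k-1}F_k$. *)

(* Defs.v *)
From mathcomp Require Import all_boot all_order all_algebra.
Set Implicit Arguments. Unset Strict Implicit. Unset Printing Implicit Defensive.
Import GRing.Theory Num.Theory.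

Fixpoint fibF (n : nat) : nat :=
  match n with
  | 0 => 1
  | 1 => 2
  | (m.+1 as p).+1 => fibF p + fibF m
  end.

(* A binary word is a seq bool in written (left-to-right) order:
   w = w_(k-1) ... w_0, so the digit of index i is the letter at
   position k-1-i of the list. *)
Definition digit (w : seq bool) (i : nat) : bool := nth false w (size w - 1 - i).

Definition valFc (w : seq bool) : int :=
  ((\sum_(i < size w) (digit w i)%:Z * (fibF i)%:Z)
   - (digit w (size w).-1)%:Z * (fibF (size w))%:Z)%R.

Definition inD (w : seq bool) : bool :=
  [&& odd (size w),
      ~~ infix [:: true; true] w,
      ~~ prefix [:: false; false; false] w
    & ~~ prefix [:: true; false; true] w].

(* Main.v *)
Require Import Defs.
From mathcomp Require Import all_boot all_order all_algebra.
From mathcomp Require Import zify.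

Local Notation F := fibF.

Lemma fibSS n : F n.+2 = F n.+1 + F n.
Proof. by []. Qed.
Lemma fib0 : F 0 = 1. Proof. by []. Qed.
Lemma fib1 : F 1 = 2. Proof. by []. Qed.
Arguments fibF : simpl never.

Lemma fib_step n : F n <= F n.+1.
Proof. case: n => // n; rewrite fibSS; lia. Qed.

Lemma fib_mono m n : m <= n -> F m <= F n.
Proof.
elim: n => [|n IH]; first by rewrite leqn0 => /eqP ->.
rewrite leq_eqVlt => /orP [/eqP -> //|H].
exact: leq_trans (IH H) (fib_step n).
Qed.

Lemma fib_pos n : 0 < F n.
Proof. elim: n => // n IH; exact: leq_trans IH (fib_step n). Qed.

Lemma fib_gt n : n < F n.
Proof.
elim: n => // n IH; case: n IH => // n IH; rewrite fibSS.
have := fib_pos n; lia.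
Qed.

Fixpoint zv (s : seq bool) : nat :=
  if s is x :: t then x * F (size t) + zv t else 0.

Fixpoint no11 (s : seq bool) : bool :=
  match s with
  | x :: t => (if t is y :: _ then ~~ (x && y) else true) && no11 t
  | [::] => true
  end.

Lemma no11E s : ~~ infix [:: true; true] s = no11 s.
Proof.
elim: s => // x s IH.
rewrite infix_consl negb_or IH /=.
case: s {IH} => [|y t] /=; first by case: x.
by rewrite prefix0s andbT; case: x; case: y.
Qed.

Lemma zv_lt s : no11 s -> zv s < F (size s).
Proof.
elim: {s} (size s) {-2}s (leqnn (size s)) => [|n IH] s.
  by case: s.
case: s => // x s /= Hs /andP [H1 H2].
case: x H1 => /=; last first.
  move=> _; move/(IH s Hs): H2 => H; have := fib_step (size s); lia.
case: s Hs H2 => [|y t] /= Hs H2; first by rewrite fib0 fib1.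
case: y H2 => //= H2 _. case/andP: H2 => _ H2.
have Ht : size t <= n by lia.
rewrite fibSS.
have := IH t Ht H2. lia.
Qed.

Arguments zv_lt {s}.

Lemma zv_inj s t : size s = size t -> no11 s -> no11 t -> zv s = zv t -> s = t.
Proof.
elim: s t => [|x s IH] [|y t] //= [Hst] /andP [_ Hs] /andP [_ Ht] E.
have Ls := zv_lt Hs; have Lt := zv_lt Ht.
rewrite Hst in Ls E.
case: x y E => [] [] /= E.
- by rewrite (IH t) //; lia.
- lia.
- lia.
- by rewrite (IH t) //; lia.
Qed.

Lemma zv_surj n x : x < F n -> exists u, [/\ size u = n, no11 u & zv u = x].
Proof.
elim: n {-2}n (leqnn n) x => [|N IH] n Hn x.
  rewrite leqn0 in Hn; rewrite (eqP Hn) fib0 => Hx; exists [::]; split => //=; lia.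
case: n Hn => [|[|n]] Hn Hx.
- by exists [::]; rewrite fib0 in Hx; split => //=; lia.
- rewrite fib1 in Hx; exists [:: x == 1]; split => //=; rewrite fib0; case: eqP; lia.
case: (ltnP x (F n.+1)) => Hx1.
  have [u [Hu1 Hu2 Hu3]] := IH n.+1 Hn x Hx1.
  exists (false :: u); split => //=; first by rewrite Hu1.
  by case: u Hu1 Hu2 Hu3 => //= *.
have [u [Hu1 Hu2 Hu3]] : exists u, [/\ size u = n, no11 u & zv u = x - F n.+1].
  apply: IH; first lia. rewrite fibSS in Hx; lia.
exists [:: true, false & u]; split => /=; first by rewrite Hu1.
  by case: u {Hu1 Hu3} Hu2.
rewrite Hu1 Hu3; lia.
Qed.

Lemma sum_zv w : (\sum_(i < size w) (digit w i)%:Z * (F i)%:Z = (zv w)%:Z)%R.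
Proof.
elim: w => [|x s IH]; first by rewrite big_ord0.
rewrite /= big_ord_recr /=.
have -> : (\sum_(i < size s) (digit (x :: s) (widen_ord (leqnSn (size s)) i))%:Z * (F (widen_ord (leqnSn (size s)) i))%:Z
   = \sum_(i < size s) (digit s i)%:Z * (F i)%:Z)%R.
  apply: eq_bigr => i _ /=; congr (_ * _)%R; congr (Posz (nat_of_bool _)).
  rewrite /digit /= subn1 /=.
  have Hi := ltn_ord i.
  have -> : (size s - i = (size s - 1 - i).+1)%N by lia.
  by [].
rewrite IH /digit /= subn1 /= subnn /=.
lia.
Qed.

Lemma valFc_cons x s :
  (valFc (x :: s) = (zv s)%:Z + (x * F (size s))%:Z - (x * F (size s).+1)%:Z)%R.
Proof.
rewrite /valFc sum_zv /= /digit /= subn1 /= subnn /=.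
lia.
Qed.

Lemma val_false u : (valFc (false :: u) = (zv u)%:Z)%R.
Proof. rewrite valFc_cons /=; lia. Qed.

Lemma val_true1 : valFc [:: true] = (-1)%R.
Proof. by rewrite valFc_cons /= fib0 fib1. Qed.

Lemma val_D u : (valFc [:: true, false, false & u] = (zv u)%:Z - (F (size u).+1)%:Z)%R.
Proof. rewrite valFc_cons /= !fibSS; lia. Qed.

Lemma inD_cases w : inD w ->
  [\/ w = [:: false], w = [:: true],
   exists m u, [/\ w = false :: u, size u = (m.*2).+2, no11 u & F (m.*2) <= zv u] |
   exists m u, [/\ w = [:: true, false, false & u], size u = m.*2 & no11 u]].
Proof.
rewrite /inD no11E.
case: w => [|x [|y [|z r]]] //=.
- by case: x => _; [apply: Or42|apply: Or41].
rewrite !prefix0s !andbT negbK.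
case/and4P => Hodd Hno Hp1 Hp2.
case: x Hno Hp1 Hp2 => /= Hno Hp1 Hp2.
- case: y Hno Hp1 Hp2 => //= Hno Hp1 Hp2.
  case: z Hno Hp1 Hp2 => //= Hno Hp1 Hp2.
  apply: Or44; exists (size r)./2, r; split => //.
  + lia.
  + by case: r Hno {Hodd Hp1 Hp2} => //= a t /andP [].
- apply: Or43; exists (size r)./2, [:: y, z & r]; split => //=.
  + lia.
  + case: y Hp1 Hp2 Hno => /= Hp1 Hp2 Hno.
      have := (@fib_mono ((size r)./2.*2) (size r).+1 ltac:(lia)); lia.
    case: z Hp1 Hp2 Hno => //= _ _ _.
    have := (@fib_mono ((size r)./2.*2) (size r) ltac:(lia)); lia.
Qed.

Lemma fib_lt n : F n < F n.+1.
Proof. case: n => [|n]; first by rewrite fib0 fib1. rewrite fibSS; have := fib_pos n; lia. Qed.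

Lemma injC m1 m2 u1 u2 : size u1 = (m1.*2).+2 -> size u2 = (m2.*2).+2 ->
  no11 u1 -> no11 u2 -> F (m1.*2) <= zv u1 -> F (m2.*2) <= zv u2 ->
  zv u1 = zv u2 -> u1 = u2.
Proof.
move=> S1 S2 N1 N2 L1 L2 E.
have Z1 := zv_lt N1; have Z2 := zv_lt N2.
rewrite S1 in Z1; rewrite S2 in Z2.
have Hm : m1 = m2.
  case: (ltngtP m1 m2) => // H.
  - have := @fib_mono (m1.*2.+2) (m2.*2) ltac:(lia); lia.
  - have := @fib_mono (m2.*2.+2) (m1.*2) ltac:(lia); lia.
apply: zv_inj => //; lia.
Qed.

Lemma injD_aux m1 m2 u1 u2 : m1 < m2 -> size u2 = m2.*2 -> no11 u2 ->
  ((zv u2)%:Z - (F (m2.*2).+1)%:Z < (zv u1)%:Z - (F (m1.*2).+1)%:Z)%R.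
Proof.
move=> H S2 N2; have Z2 := zv_lt N2; rewrite S2 in Z2.
case: m2 H S2 Z2 => // k H S2 Z2.
rewrite doubleS in Z2 *. rewrite fibSS.
have := @fib_mono (m1.*2.+1) (k.*2.+1) ltac:(lia). lia.
Qed.

Lemma injD m1 m2 u1 u2 : size u1 = m1.*2 -> size u2 = m2.*2 ->
  no11 u1 -> no11 u2 ->
  ((zv u1)%:Z - (F (m1.*2).+1)%:Z = (zv u2)%:Z - (F (m2.*2).+1)%:Z)%R -> u1 = u2.
Proof.
move=> S1 S2 N1 N2 E.
have Hm : m1 = m2.
  case: (ltngtP m1 m2) => // H.
  - have := @injD_aux m1 m2 u1 u2 H S2 N2; lia.
  - have := @injD_aux m2 m1 u2 u1 H S1 N1; lia.
subst m2. apply: zv_inj => //; lia.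
Qed.

Arguments injC {m1 m2 u1 u2}.
Arguments injD {m1 m2 u1 u2}.

Lemma find_pos z : 0 < z -> exists m, F (m.*2) <= z < F (m.*2.+2).
Proof.
move=> Hz.
suff H : forall N, z < F (N.*2) -> exists m, F (m.*2) <= z < F (m.*2.+2).
  apply: (H z); have := fib_gt (z.*2); lia.
elim => [|N IH]; first by rewrite fib0; lia.
rewrite doubleS => HN.
case: (ltnP z (F N.*2)) => H; first exact: IH.
by exists N; rewrite H HN.
Qed.

Lemma find_neg y : 1 < y -> exists m, F (m.*2.+1) - F (m.*2) < y <= F (m.*2.+1).
Proof.
move=> Hy.
suff H : forall N, y <= F (N.*2.+1) -> exists m, F (m.*2.+1) - F (m.*2) < y <= F (m.*2.+1).
  apply: (H y); have := fib_gt (y.*2.+1); lia.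
elim => [|N IH].
  rewrite fib1 => H; exists 0; rewrite fib0 fib1; lia.
rewrite doubleS => HN.
case: (leqP y (F N.*2.+1)) => H; first exact: IH.
exists N.+1; rewrite doubleS; have := fibSS (N.*2.+1); lia.
Qed.

Theorem proposition2p3 :
  (forall w1 w2 : seq bool, inD w1 -> inD w2 -> valFc w1 = valFc w2 -> w1 = w2) /\
  (forall z : int, exists w : seq bool, inD w /\ valFc w = z).
Proof.
split.
- move=> w1 w2 /inD_cases H1 /inD_cases H2 E.
  case: H1 E => [->|->|[m1 [u1 [-> S1 N1 L1]]]|[m1 [u1 [-> S1 N1]]]];
  case: H2 => [->|->|[m2 [u2 [-> S2 N2 L2]]]|[m2 [u2 [-> S2 N2]]]] //;
  rewrite ?val_false ?val_true1 ?val_D => E.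
  all: try have Z1 := zv_lt N1; try have Z2 := zv_lt N2.
  all: try rewrite S1 in Z1 E *; try rewrite S2 in Z2 E *.
  all: try have P1 := fib_pos (m1.*2); try have P2 := fib_pos (m2.*2).
  all: try have T1 := fib_lt (m1.*2); try have T2 := fib_lt (m2.*2).
  all: try (rewrite /= in E); try lia.
  + by rewrite (injC S1 S2 N1 N2 L1 L2) //; lia.
  + by rewrite (injD S1 S2 N1 N2 E).
- case=> n.
  + case: n => [|n].
      exists [:: false]; split => //; by rewrite val_false.
    have [m /andP [Hm1 Hm2]] := @find_pos n.+1 (ltn0Sn n).
    have [u [Hu1 Hu2 Hu3]] := @zv_surj _ _ Hm2.
    exists (false :: u); split; last by rewrite val_false Hu3.
    rewrite /inD no11E /= Hu1 /= odd_double Hu2 /=.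
    case: u Hu1 Hu2 Hu3 => [|a [|b t]] //= Hu1 Hu2 Hu3.
    case: a b Hu1 Hu2 Hu3 => [] [] //= [Hu1] /andP [_ Hu2] Hu3.
    have := zv_lt Hu2; rewrite Hu1; lia.
  + case: n => [|n].
      by exists [:: true]; split => //; rewrite val_true1.
    have [m /andP [Hm1 Hm2]] := @find_neg n.+2 (isT : 1 < n.+2).
    have [u [Hu1 Hu2 Hu3]] : exists u, [/\ size u = m.*2, no11 u & zv u = F (m.*2.+1) - n.+2].
      apply: zv_surj; lia.
    exists [:: true, false, false & u]; split.
      rewrite /inD no11E /= Hu1 odd_double /=.
      by case: u {Hu1 Hu3} Hu2 => //= a t ->; rewrite andbT.
    rewrite val_D Hu1 Hu3 NegzE. lia.
Qed.
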